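(* Let $f:\mathbb{R}^n\to\mathbb{R}\cup\{+\infty\}$ be a polyhedral M-convex function with bounded $\operatorname{dom}_{\mathbb{R}} f$. Then for all $x,y\in\operatorname{dom}_{\mathbb{R}} f$, $f(y)-f(x)\ge\tfrac12\|y-x\|_1\,\phi_{\mathbb{R}}(x)$.
   Context: $N=\{1,\dots,n\}$; $\chi_i$ is the $i$-th unit vector. $\operatorname{dom}_{\mathbb{R}} f=\{x\in\mathbb{R}^n:f(x)<+\infty\}$. A polyhedral convex function $f:\mathbb{R}^n\to\mathbb{R}\cup\{+\infty\}$ (epigraph a polyhedron, $\operatorname{dom}_{\mathbb{R}} f\neq\emptyset$) is M-convex if for all $x,y\in\operatorname{dom}_{\mathbb{R}} f$ and every $i$ with $x(i)>y(i)$ there exist $j$ with $x(j)<y(j)$ and $\epsilon_0>0$ such that $f(x)+f(y)\ge f(x-\epsilon(\chi_i-\chi_j))+f(y+\epsilon(\chi_i-\chi_j))$ for all $\epsilon\in[0,\epsilon_0]$. For $x\in\operatorname{dom}_{\mathbb{R}} f$, $f'_{\mathbb{R}}(x;i,j)=\lim_{\alpha\downarrow0}(f(x+\alpha(\chi_i-\chi_j))-f(x))/\alpha$ (possibly $+\infty$), and $\phi_{\mathbb{R}}(x)=\min_{i,j\in N}f'_{\mathbb{R}}(x;i,j)$. *)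

(* Defs.v *)
From HB Require Import structures.
From mathcomp Require Import all_boot all_order all_algebra.
From mathcomp Require Import all_classical all_reals all_analysis.
Set Implicit Arguments. Unset Strict Implicit. Unset Printing Implicit Defensive.
Import Order.TTheory GRing.Theory Num.Theory.
Import numFieldNormedType.Exports.
Local Open Scope classical_set_scope.
Local Open Scope ring_scope.

Section Defs.
Variables (R : realType) (n : nat).
Implicit Types (f : ('I_n -> R) -> \bar R) (x y : 'I_n -> R).

Definition chi (i : 'I_n) : 'I_n -> R := fun k => (k == i)%:R.

Definition move x (a : R) (i j : 'I_n) : 'I_n -> R :=
  fun k => x k + a * (chi i k - chi j k).

Definition domR f : set ('I_n -> R) := [set x | (f x < +oo)%E].

(* f : R^n -> R \cup {+oo} *)
Definition no_minfty f := forall x, f x != -oo%E.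

(* the epigraph {(x,t) | f x <= t} is a polyhedron, i.e. the solution set
   of finitely many linear inequalities in (x, t) *)
Definition epi_polyhedral f := exists (m : nat) (A : 'I_m -> 'I_n -> R)
  (b : 'I_m -> R) (c : 'I_m -> R), forall x (t : R),
    (f x <= t%:E)%E <-> (forall k, \sum_(i < n) A k i * x i + b k * t <= c k).

Definition polyhedral_convex f :=
  [/\ no_minfty f, epi_polyhedral f & domR f !=set0].

Definition M_convex f :=
  polyhedral_convex f /\
  forall x y, domR f x -> domR f y -> forall i, y i < x i ->
    exists j, x j < y j /\ exists2 eps0 : R, 0 < eps0 &
      forall eps : R, 0 <= eps <= eps0 ->
        (f (move x (- eps) i j) + f (move y eps i j) <= f x + f y)%E.

Definition dderiv f x (i j : 'I_n) : \bar R :=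
  lim ((fun a : R => ((f (move x a i j) - f x) * (a^-1)%:E)%E) @ 0^'+).

Definition phiR f x : \bar R :=
  \big[Order.min/+oo%E]_(i < n) \big[Order.min/+oo%E]_(j < n) dderiv f x i j.

Definition norm1 x : R := \sum_(i < n) `|x i|.

Definition bounded_coords (S : set ('I_n -> R)) :=
  exists M : R, forall x, S x -> forall i, `|x i| <= M.

End Defs.

(* Main.v *)
Require Import Defs.
From HB Require Import structures.
From mathcomp Require Import all_boot all_order all_algebra.
From mathcomp Require Import all_classical all_reals all_analysis.
From mathcomp Require Import ring lra.
Import Order.TTheory GRing.Theory Num.Theory.
Import numFieldNormedType.Exports.
Set Implicit Arguments. Unset Strict Implicit. Unset Printing Implicit Defensive.
Local Open Scope classical_set_scope.
Local Open Scope ring_scope.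

Section Aux.
Variables (R : realType) (n : nat) (f : ('I_n -> R) -> \bar R).
Hypothesis fnm : no_minfty f.
Hypothesis fepi : epi_polyhedral f.

Lemma fin_dom u : domR f u -> f u = (fine (f u))%:E.
Proof.
rewrite /domR /= => h; have := fnm u.
by case: (f u) h.
Qed.

Lemma conv_f u v (l : R) : domR f u -> domR f v -> 0 <= l <= 1 ->
  (f (fun k => l * u k + (1 - l) * v k)%R <=
    (l * fine (f u) + (1 - l) * fine (f v))%R%:E)%E.
Proof.
move=> du dv /andP[l0 l1].
case: fepi => m [A [b [c H]]].
apply/H => k.
have hu : (forall k, \sum_(i < n) A k i * u i + b k * fine (f u) <= c k).
  by apply/H; rewrite -fin_dom.
have hv : (forall k, \sum_(i < n) A k i * v i + b k * fine (f v) <= c k).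
  by apply/H; rewrite -fin_dom.
have e : \sum_(i < n) A k i * (l * u i + (1 - l) * v i) +
   b k * (l * fine (f u) + (1 - l) * fine (f v)) =
   l * (\sum_(i < n) A k i * u i + b k * fine (f u)) +
   (1 - l) * (\sum_(i < n) A k i * v i + b k * fine (f v)).
  have s1 : \sum_(i < n) A k i * (l * u i + (1 - l) * v i) =
      l * \sum_(i < n) A k i * u i + (1 - l) * \sum_(i < n) A k i * v i.
    rewrite !mulr_sumr -big_split /=; apply: eq_bigr => i _; ring.
  rewrite s1; ring.
rewrite e.
have := hu k; have := hv k.
move: (\sum_(i < n) A k i * u i + b k * fine (f u)) => p.
move: (\sum_(i < n) A k i * v i + b k * fine (f v)) => q.
move=> hq hp.
have l1' : 0 <= 1 - l by rewrite subr_ge0.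
have -> : c k = l * c k + (1 - l) * c k by ring.
by apply: lerD; apply: ler_wpM2l.
Qed.

End Aux.

Section Aux2.
Variables (R : realType) (n : nat) (f : ('I_n -> R) -> \bar R).
Hypothesis fnm : no_minfty f.
Hypothesis fepi : epi_polyhedral f.

Definition qq x i j (a : R) : \bar R :=
  ((f (move x a i j) - f x) * (a^-1)%:E)%E.

Lemma qq_mono x i j a b : domR f x -> 0 < a -> a <= b -> (qq x i j a <= qq x i j b)%E.
Proof.
move=> dx a0 ab.
have b0 : 0 < b by apply: lt_le_trans ab.
rewrite /qq.
have [db|ndb] := boolP (f (move x b i j) < +oo)%E; last first.
  have -> : f (move x b i j) = +oo%E.
    by move: ndb; rewrite -leNgt leye_eq => /eqP.
  rewrite (fin_dom fnm dx) -EFinN addeC /= (@gt0_mulye _ _) ?leey //.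
  by rewrite lte_fin invr_gt0.
set l := a / b.
have l01 : 0 <= l <= 1.
  apply/andP; split; first exact: divr_ge0 (ltW a0) (ltW b0).
  by rewrite /l ler_pdivrMr // mul1r.
have em : move x a i j = (fun k => l * move x b i j k + (1 - l) * x k)%R.
  apply/funext => k; rewrite /move /l; field; exact: lt0r_neq0.
have := conv_f fnm fepi (db : domR f (move x b i j)) dx l01.
rewrite -em => ha.
have da : domR f (move x a i j) by rewrite /domR /=; apply: le_lt_trans ha (ltey _).
rewrite (fin_dom fnm da) (fin_dom fnm db) (fin_dom fnm dx) in ha *.
rewrite lee_fin in ha.
rewrite -!EFinB -!EFinM lee_fin.
move: (fine (f (move x a i j))) (fine (f (move x b i j))) (fine (f x)) ha => Fa Fb Fx ha.
have h1 : Fa - Fx <= l * (Fb - Fx).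
  rewrite mulrBr; rewrite /= mulrBl mul1r in ha; lra.
have ai : 0 <= a^-1 by rewrite invr_ge0 ltW.
have := ler_wpM2r ai h1.
have -> : l * (Fb - Fx) * a^-1 = (Fb - Fx) * b^-1.
  rewrite /l; field; apply/andP; split; exact: lt0r_neq0.
by [].
Qed.

Lemma dderiv_le x i j e : domR f x -> 0 < e -> (dderiv f x i j <= qq x i j e)%E.
Proof.
move=> dx e0.
have H := @nondecreasing_at_right_cvge R (qq x i j) 0 (BInfty R false) isT.
have H' : {in Interval (BRight 0) (BInfty R false) &, nondecreasing_fun (qq x i j)}.
  move=> a b; rewrite !in_itv /= !andbT => a0 b0 ab; exact: qq_mono.
have := H H'.
move=> /(@cvg_lim _ _ _ _ _) => /(_ _) hl.
rewrite /dderiv.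
rewrite [X in (X <= _)%E](_ : _ = ereal_inf [set qq x i j r | r in [set` Interval (BRight 0) (BInfty R false)]]).
  apply: ereal_inf_lbound; exists e => //=; rewrite in_itv /= andbT; exact: e0.
exact: hl.
Qed.

End Aux2.

Section Cont.
Variables (R : realType) (n : nat).

Lemma cont_sum (I : Type) (s : seq I) (g : I -> 'rV[R]_n -> R) :
  (forall i, continuous (g i)) -> continuous (fun v => \sum_(i <- s) g i v).
Proof.
move=> hg; elim: s => [|a s IH].
  under eq_fun do rewrite big_nil; exact: cst_continuous.
under eq_fun do rewrite big_cons.
move=> v; apply: (@continuousD _ _ _ (g a) (fun v => \sum_(i <- s) g i v)).
  exact: hg.
exact: IH.
Qed.

Lemma cont_scal (a : R) (g : 'rV[R]_n -> R) :
  continuous g -> continuous (fun v => a * g v).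
Proof.
move=> hg v; apply: (@continuousM _ _ (fun=> a) g); last exact: hg.
exact: cst_continuous.
Qed.

Lemma cont_abs (g : 'rV[R]_n -> R) :
  continuous g -> continuous (fun v => `|g v|).
Proof.
move=> hg v; apply: (@continuous_comp _ _ _ g (@Num.norm _ R)); first exact: hg.
exact: norm_continuous.
Qed.

Lemma cont_coordB (c : R) (k : 'I_n) : continuous (fun v : 'rV[R]_n => v ord0 k - c).
Proof.
move=> v; apply: (@continuousB _ _ _ (fun v : 'rV[R]_n => v ord0 k) (fun=> c)).
  exact: coord_continuous.
exact: cst_continuous.
Qed.

End Cont.

Section Main.
Variables (R : realType) (n : nat) (f : ('I_n -> R) -> \bar R).
Hypothesis fM : M_convex f.
Hypothesis fb : bounded_coords (domR f).
Variable x : 'I_n -> R.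
Hypothesis dx : domR f x.
Variable r : R.
Hypothesis hr : forall i j e, 0 < e -> (r%:E <= qq f x i j e)%E.

Let fnm : no_minfty f. Proof. by case: fM => -[]. Qed.
Let fepi : epi_polyhedral f. Proof. by case: fM => -[]. Qed.

Let N (z : 'I_n -> R) := norm1 (fun k => z k - x k).
Let F z := fine (f z).
Let vec (v : 'rV[R]_n) : 'I_n -> R := fun k => v ord0 k.

Lemma step_ineq i j e : 0 < e -> domR f (move x e i j) ->
  e * r <= F (move x e i j) - F x.
Proof.
move=> e0 de; have := hr i j e0; rewrite /qq (fin_dom fnm de) (fin_dom fnm dx).
rewrite -EFinB -EFinM lee_fin => h.
by rewrite mulrC -ler_pdivlMr.
Qed.

Lemma le_dom z (t : R) : (f z <= t%:E)%E -> domR f z.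
Proof. by move=> h; rewrite /domR /=; apply: le_lt_trans h (ltey _). Qed.

Lemma main_ineq y : domR f y -> N y / 2 * r <= F y - F x.
Proof.
move=> dy.
set G := F y - N y / 2 * r.
set S := [set v : 'rV[R]_n | (f (vec v) <= (G + N (vec v) / 2 * r)%:E)%E].
have Sy : S (\row_k y k).
  rewrite /S /= /vec.
  have -> : (fun k => (\row_k0 y k0) ord0 k) = y by apply/funext => k; rewrite mxE.
  rewrite (fin_dom fnm dy) lee_fin /G /F; lra.
have contN : continuous (fun v => N (vec v)).
  rewrite /N /norm1 /vec; apply: cont_sum => k; apply: cont_abs; exact: cont_coordB.
have cS : compact S.
  apply: bounded_closed_compact.
    case: fb => M hM.
    exists (Num.max M 0); split; first exact: num_real.
    move=> M' MM' v Sv.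
    have M'0 : 0 <= M'. 
      by apply: le_trans (ltW MM'); rewrite le_max lexx orbT.
    rewrite /= [leLHS]/Num.norm /= mx_normrE.
    apply: bigmax_le => // -[a k] _ /=.
    rewrite (ord1 a).
    have := hM _ (le_dom Sv) k; rewrite /vec => h.
    apply: le_trans h _; apply: le_trans (ltW MM'); by rewrite le_max lexx.
  case: fepi => m [A [b [c H]]].
  pose hk k (v : 'rV[R]_n) := \sum_(i < n) A k i * v ord0 i + b k * (G + N (vec v) / 2 * r).
  have -> : S = \bigcap_(k in setT) (hk k @^-1` [set t | t <= c k]).
    apply/seteqP; split => v.
      by rewrite /S /= => /H hv k _; exact: hv.
    by move=> hv; rewrite /S /=; apply/H => k; exact: hv.
  apply: closed_bigI => k _; apply: preimage_closed; last exact: closed_le.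
  move=> v _; rewrite /hk.
  apply: (@continuousD _ _ _ (fun v : 'rV[R]_n => \sum_(i < n) A k i * v ord0 i)
     (fun v => b k * (G + N (vec v) / 2 * r))).
    apply: cont_sum => i; apply: cont_scal; exact: coord_continuous.
  apply: cont_scal => w.
  apply: (@continuousD _ _ _ (fun=> G) (fun v => N (vec v) / 2 * r)).
    exact: cst_continuous.
  have -> : (fun v => N (vec v) / 2 * r) = (fun v => (2^-1 * r) * N (vec v)).
    by apply/funext => u; ring.
  exact: (@cont_scal _ _ (2^-1 * r) _ contN w).
have cD : {within S, continuous (fun v => N (vec v))}.
  exact: continuous_subspaceT.
have [c Sc cmin] := EVT_min_rV (ex_intro _ _ Sy) cS cD.
rewrite inE in Sc.
set z := vec c.
have dz : domR f z by apply: le_dom Sc.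
have [zx|zx] := pselect (z = x).
  move: Sc; rewrite /S /= -/z zx (fin_dom fnm dx) lee_fin.
  have -> : N x = 0 by rewrite /N /norm1 big1 // => k _; rewrite subrr normr0.
  rewrite /G /F; lra.
exfalso.
have [i xi] : exists i, x i < z i.
  have [k zk] : exists k, z k != x k.
    apply/not_existsP => h; apply: zx; apply/funext => k.
    by have /negP := h k; rewrite negbK => /eqP.
  have [lt|gt] : x k < z k \/ z k < x k.
    by move: zk; rewrite neq_lt => /orP[] h; [right|left].
    by exists k.
  case: fM => _ /(_ x z dx dz k gt) [j [xj _]]; by exists j.
case: fM => _ /(_ z x dz dx i xi) [j [zj [e0 e00 H]]].
set e := Order.min e0 (Order.min (z i - x i) (x j - z j)).
have ep : 0 < e by rewrite /e !lt_min e00 !subr_gt0 xi zj.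
have ee0 : e <= e0 by rewrite /e ge_min lexx.
have eij : e <= z i - x i by rewrite /e !ge_min lexx orbT.
have ejj : e <= x j - z j by rewrite /e !ge_min lexx !orbT.
have He := H e (introT andP (conj (ltW ep) ee0)).
have ij : i != j.
  apply/eqP => eij'; move: zj; rewrite -eij' => zj.
  by move: (lt_trans xi zj); rewrite ltxx.
set z' := move z (- e) i j.
set xe := move x e i j.
have fin2 : (f z + f x < +oo)%E.
  by rewrite (fin_dom fnm dz) (fin_dom fnm dx) -EFinD ltey.
have fin2' : f z + f x = (F z + F x)%:E.
  by rewrite (fin_dom fnm dz) (fin_dom fnm dx) -EFinD.
have dz' : domR f z'.
  rewrite /domR /= ltey; apply/negP => /eqP h.
  by move: He; rewrite -/z' h addye ?fnm // fin2' leye_eq.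
have dxe : domR f xe.
  rewrite /domR /= ltey; apply/negP => /eqP h.
  by move: He; rewrite -/xe h addey ?fnm // fin2' leye_eq.
move: He; rewrite -/z' -/xe (fin_dom fnm dz') (fin_dom fnm dxe)
  (fin_dom fnm dz) (fin_dom fnm dx) -!EFinD lee_fin => He.
have st := step_ineq ep dxe.
have Nz' : N z' = N z - 2 * e.
  have pk : forall k, `|z' k - x k| = `|z k - x k| - e * ((k == i)%:R + (k == j)%:R).
    move=> k; rewrite /z' /move /chi.
    have [->|ki] := eqVneq k i.
      rewrite (negPf ij) /= ?mulr1n ?mulr0n subr0 addr0 mulr1.
      rewrite !ger0_norm; first lra.
        by rewrite subr_ge0 ltW.
      lra.
    have [->|kj] := eqVneq k j.
      rewrite /= ?mulr1n ?mulr0n sub0r add0r mulr1 mulrN1 opprK.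
      rewrite !ler0_norm; first lra.
        by rewrite subr_le0 ltW.
      lra.
    by rewrite /= ?mulr0n subrr mulr0 addr0 addr0 mulr0 subr0.
  rewrite /N /norm1 (eq_bigr _ (fun k _ => pk k)) sumrB -mulr_sumr big_split /=.
  have s1 : forall a : 'I_n, \sum_(k < n) ((k == a)%:R : R) = 1.
    move=> a; rewrite (bigD1 a) //= eqxx big1 ?addr0 // => k /negPf -> //.
  rewrite !s1; congr (_ - _); lra.

have Sz' : S (\row_k z' k).
  rewrite /S /= /vec.
  have -> : (fun k => (\row_k0 z' k0) ord0 k) = z' by apply/funext => k; rewrite mxE.
  rewrite (fin_dom fnm dz') lee_fin Nz'.
  move: Sc; rewrite /S /= -/z (fin_dom fnm dz) lee_fin => Sc.
  rewrite /F in st; lra.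
have := cmin _ (mem_set Sz').
have -> : vec (\row_k z' k) = z' by apply/funext => k; rewrite /vec mxE.
rewrite -/z Nz'; lra.
Qed.

End Main.

Unset Implicit Arguments.

Theorem mainTheorem13 (R : realType) (n : nat) (f : ('I_n -> R) -> \bar R) :
  M_convex f -> bounded_coords (domR f) ->
  forall x y : 'I_n -> R, domR f x -> domR f y ->
    (((2^-1 * norm1 (fun k => y k - x k))%:E * phiR f x) <= f y - f x)%E.
Proof.
move=> fM fb x y dx dy.
have fnm : no_minfty f by case: fM => -[].
have fepi : epi_polyhedral f by case: fM => -[].
set Nn := norm1 (fun k => y k - x k).
have Nn0 : 0 <= Nn by apply: sumr_ge0 => k _.
have [NnE|Nnpos] := eqVneq Nn 0.
  have yx : y = x.
    apply/funext => k.
    have := @psumr_eq0P _ _ xpredT (fun i => `|y i - x i|) (fun i _ => normr_ge0 _) NnE k isT.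
    by move/eqP; rewrite normr_eq0 subr_eq0 => /eqP.
  rewrite NnE mulr0 mul0e yx (fin_dom fnm dx) -EFinB subrr lexx //.
have Np : 0 < Nn by rewrite lt0r Nnpos.
have phile : forall i j, (phiR f x <= dderiv f x i j)%E.
  move=> i j; rewrite /phiR.
  apply: le_trans; first exact: (@bigmin_le _ _ _ _ i).
  exact: bigmin_le.
rewrite (fin_dom fnm dy) (fin_dom fnm dx) -EFinB.
case eqP: (phiR f x) => [t| |].
- have hr : forall i j e, 0 < e -> (t%:E <= qq f x i j e)%E.
    move=> i j e e0; rewrite -eqP; apply: le_trans (phile i j) _.
    exact: dderiv_le.
  have := main_ineq fM fb dx hr dy; rewrite -/Nn => h.
  rewrite -EFinM lee_fin; lra.
- exfalso.
  set r := (2 * (fine (f y) - fine (f x) + Nn)) / Nn.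
  have hr : forall i j e, 0 < e -> (r%:E <= qq f x i j e)%E.
    move=> i j e e0; apply: le_trans (dderiv_le fnm fepi i j dx e0).
    by apply: le_trans (phile i j); rewrite eqP leey.
  have := main_ineq fM fb dx hr dy; rewrite -/Nn.
  have -> : Nn / 2 * r = fine (f y) - fine (f x) + Nn.
    rewrite /r; field; exact: Nnpos.
  lra.
- rewrite gt0_muleNy ?leNye // lte_fin mulr_gt0 // invr_gt0; lra.
Qed.
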